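(* Let $k\ge 3$ be an integer, $B\ge 1$ real and $d$ a natural number. The number of pairs $(u,v)\in\mathbb{Z}^2$ with $|u|\leq B$, $|v|\leq B$ and $u^k\equiv v^k\pmod d$ is $O(B^{1+\varepsilon}+B^{2+\varepsilon}d^{\varepsilon-2/k})$ for every $\varepsilon>0$, the implicit constant depending only on $k$ and $\varepsilon$. *)

(* Defs.v *)
From Stdlib Require Import Reals ZArith List.
Import ListNotations.
Open Scope R_scope.

Definition zrange (M : Z) : list Z :=
  map (fun n => (Z.of_nat n - M)%Z) (seq 0 (Z.to_nat (2 * M + 1))).

(* Since |u| <= B < up B, all such pairs lie in zrange (|up B|)^2, so this
   enumeration counts exactly the set in question. *)
Definition pair_count (k : nat) (B : R) (d : nat) : nat :=
  let M := Z.abs (up B) in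
  length (filter
    (fun p : Z * Z =>
       (if Rle_dec (Rabs (IZR (fst p))) B then true else false) &&
       (if Rle_dec (Rabs (IZR (snd p))) B then true else false) &&
       Z.eqb (Z.modulo (fst p ^ Z.of_nat k - snd p ^ Z.of_nat k) (Z.of_nat d)) 0)%bool
    (list_prod (zrange M) (zrange M))).

(* Main.v *)
Require Import Defs.
From Stdlib Require Import Reals ZArith List Lia Lra Znumtheory Zpow_facts Psatz Bool.
Import ListNotations.

Open Scope Z_scope.

Definition cnt {A} (f : A -> bool) (l : list A) : nat := length (filter f l).

Fixpoint lsum {A} (h : A -> nat) (l : list A) : nat :=
  match l with [] => 0%nat | x :: l' => (h x + lsum h l')%nat end.

Lemma lsum_le {A} (h1 h2 : A -> nat) l :
  (forall x, In x l -> (h1 x <= h2 x)%nat) -> (lsum h1 l <= lsum h2 l)%nat.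
Proof.
  induction l as [|x l IH]; simpl; intros H; [lia|].
  specialize (IH (fun y Hy => H y (or_intror Hy))). specialize (H x (or_introl eq_refl)). lia.
Qed.

Lemma lsum_const {A} c (l : list A) : lsum (fun _ => c) l = (c * length l)%nat.
Proof. induction l; simpl; lia. Qed.

Lemma lsum_add {A} (h1 h2 : A -> nat) l :
  lsum (fun x => h1 x + h2 x)%nat l = (lsum h1 l + lsum h2 l)%nat.
Proof. induction l; simpl; lia. Qed.

Lemma lsum_In {A} (h : A -> nat) l y : In y l -> (h y <= lsum h l)%nat.
Proof. induction l; simpl; [tauto|]. intros [->|H]; [lia|]. specialize (IHl H). lia. Qed.

Lemma cnt_cons {A} (f : A -> bool) x l :
  cnt f (x :: l) = ((if f x then 1 else 0) + cnt f l)%nat.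
Proof. unfold cnt; simpl. destruct (f x); reflexivity. Qed.

Lemma cnt_app {A} (f : A -> bool) l1 l2 : cnt f (l1 ++ l2) = (cnt f l1 + cnt f l2)%nat.
Proof. unfold cnt. rewrite filter_app, length_app. reflexivity. Qed.

Lemma cnt_map {A B} (f : B -> bool) (h : A -> B) l : cnt f (map h l) = cnt (fun x => f (h x)) l.
Proof. induction l; simpl; [reflexivity|]. rewrite !cnt_cons, IHl. reflexivity. Qed.

Lemma cnt_prod {A B} (f : A*B -> bool) l1 l2 :
  cnt f (list_prod l1 l2) = lsum (fun x => cnt (fun y => f (x,y)) l2) l1.
Proof.
  induction l1 as [|x l1 IH]; simpl; [reflexivity|].
  rewrite cnt_app, IH, cnt_map. reflexivity.
Qed.

Lemma cnt_le {A} (f g : A -> bool) l :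
  (forall x, In x l -> f x = true -> g x = true) -> (cnt f l <= cnt g l)%nat.
Proof.
  induction l as [|x l IH]; intros H; [unfold cnt; simpl; lia|].
  rewrite !cnt_cons. specialize (IH (fun y Hy => H y (or_intror Hy))).
  specialize (H x (or_introl eq_refl)). destruct (f x), (g x); try lia. 
Qed.

Lemma cnt_length {A} (f : A -> bool) l : (cnt f l <= length l)%nat.
Proof. unfold cnt. apply filter_length_le. Qed.

Lemma cnt_cover {A B} (f : A -> bool) (g : B -> A -> bool) (G : list B) l :
  (forall x, In x l -> f x = true -> exists y, In y G /\ g y x = true) ->
  (cnt f l <= lsum (fun y => cnt (g y) l) G)%nat.
Proof.
  induction l as [|x l IH]; intros H.
  - unfold cnt; simpl. lia.
  - rewrite cnt_cons.
    assert (E : lsum (fun y => cnt (g y) (x :: l)) G =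
                (lsum (fun y => if g y x then 1 else 0) G + lsum (fun y => cnt (g y) l) G)%nat).
    { rewrite <- lsum_add. clear H IH. induction G; simpl; [reflexivity|]. rewrite IHG, cnt_cons. reflexivity. }
    rewrite E. specialize (IH (fun y Hy => H y (or_intror Hy))).
    destruct (f x) eqn:Ef; [|lia].
    destruct (H x (or_introl eq_refl) Ef) as [y [Hy Hg]].
    pose proof (lsum_In (fun y => if g y x then 1 else 0)%nat G y Hy) as Hl. simpl in Hl.
    rewrite Hg in Hl. lia.
Qed.

Lemma cnt_inj {A B} (f : A -> B) (l : list A) (l' : list B) :
  NoDup l -> (forall x, In x l -> In (f x) l') ->
  (forall x y, In x l -> In y l -> f x = f y -> x = y) -> (length l <= length l')%nat.
Proof.
  intros Hn Hi Hj. rewrite <- (length_map f l). apply NoDup_incl_length.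
  - apply NoDup_map_NoDup_ForallPairs; auto.
  - intros b Hb. apply in_map_iff in Hb. destruct Hb as [x [<- Hx]]. auto.
Qed.

Lemma lsum_ind {A} (P : A -> bool) c l :
  lsum (fun x => if P x then c else 0%nat) l = (c * cnt P l)%nat.
Proof. induction l; simpl; [unfold cnt; simpl; lia|]. rewrite cnt_cons, IHl. destruct (P a); lia. Qed.

Definition zseq (a : Z) (n : Z) : list Z := map (fun i => a + Z.of_nat i) (seq 0 (Z.to_nat n)).

Lemma in_zseq a n x : In x (zseq a n) <-> a <= x < a + n.
Proof.
  unfold zseq. rewrite in_map_iff. split.
  - intros [i [<- Hi]]. apply in_seq in Hi. lia.
  - intros H. exists (Z.to_nat (x - a)). split; [lia|]. apply in_seq. lia.
Qed.

Lemma zseq_NoDup a n : NoDup (zseq a n).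
Proof.
  unfold zseq. apply NoDup_map_NoDup_ForallPairs; [|apply seq_NoDup].
  intros x y _ _ H. lia.
Qed.

Lemma zseq_length a n : length (zseq a n) = Z.to_nat n.
Proof. unfold zseq. rewrite length_map, length_seq. reflexivity. Qed.

Lemma cnt_zero {A} (f : A -> bool) l : (forall x, In x l -> f x = false) -> cnt f l = 0%nat.
Proof.
  induction l as [|x l IH]; intros H; [reflexivity|].
  rewrite cnt_cons, H by (left; auto). rewrite IH; auto. intros y Hy; apply H; right; auto.
Qed.

Open Scope bool_scope.
Open Scope Z_scope.

Lemma modeq0 x q : q <> 0 -> (x mod q =? 0) = true <-> (q | x).
Proof.
  intros Hq. rewrite Z.eqb_eq. split; [apply Zmod_divide; auto|apply Zdivide_mod].
Qed.

Lemma div_small0 q x : (q | x) -> Z.abs x < Z.abs q -> x = 0.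
Proof.
  intros H1 H2. destruct (Z.eq_dec x 0) as [|Hx]; auto.
  pose proof (Zdivide_bounds q x H1 Hx). lia.
Qed.

Lemma div_sub_mod q a b : 0 < q -> (q | a - b) -> a mod q = b mod q.
Proof.
  intros Hq [c Hc]. replace a with (b + c * q) by lia. rewrite Z.mod_add; lia.
Qed.

Lemma AP_count (l : list Z) X q r : NoDup l -> 0 <= X -> 0 < q ->
  (cnt (fun v => Z.leb (Z.abs v) X && Z.eqb ((v - r) mod q) 0) l <= Z.to_nat (2 * X / q) + 1)%nat.
Proof.
  intros Hn HX Hq. unfold cnt.
  replace (Z.to_nat (2 * X / q) + 1)%nat with (length (zseq 0 (2 * X / q + 1))).
  2:{ rewrite zseq_length. assert (0 <= 2 * X / q) by (apply Z.div_pos; lia). lia. }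
  apply (cnt_inj (fun v => (v + X) / q)).
  - apply NoDup_filter; auto.
  - intros x Hx. apply filter_In in Hx. destruct Hx as [_ Hx].
    apply andb_prop in Hx. destruct Hx as [H1 _]. apply Z.leb_le in H1.
    apply in_zseq. split.
    + apply Z.div_pos; lia.
    + assert ((x + X) / q <= 2 * X / q) by (apply Z.div_le_mono; lia). lia.
  - intros x y Hx Hy E. apply filter_In in Hx, Hy. destruct Hx as [_ Hx]; destruct Hy as [_ Hy].
    apply andb_prop in Hx, Hy. destruct Hx as [_ Hx]; destruct Hy as [_ Hy].
    apply modeq0 in Hx, Hy; try lia.
    assert (Hm : (x + X) mod q = (y + X) mod q).
    { apply div_sub_mod; auto. replace (x + X - (y + X)) with ((x - r) - (y - r)) by lia.
      apply Z.divide_sub_r; auto. }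
    pose proof (Z.div_mod (x + X) q ltac:(lia)). pose proof (Z.div_mod (y + X) q ltac:(lia)). lia.
Qed.

Open Scope Z_scope.

Fixpoint geo (w : Z) (t : nat) : Z :=
  match t with O => 0 | S t => geo w t + w ^ Z.of_nat t end.

Lemma pow_S w t : w ^ Z.of_nat (S t) = w * w ^ Z.of_nat t.
Proof. rewrite Nat2Z.inj_succ, Z.pow_succ_r; lia. Qed.

Lemma geo_id w t : w ^ Z.of_nat t - 1 = (w - 1) * geo w t.
Proof. induction t; simpl geo. - simpl. ring. - rewrite pow_S. nia. Qed.

Lemma dvd_pow_sub1 w t : (w - 1 | w ^ Z.of_nat t - 1).
Proof. rewrite geo_id. apply Z.divide_factor_l. Qed.

Lemma dvd_pow_sub1' q w t : (q | w - 1) -> (q | w ^ Z.of_nat t - 1).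
Proof. intros H. eapply Z.divide_trans; [apply H|apply dvd_pow_sub1]. Qed.

Lemma geo_mod p w t : (p | w - 1) -> (p | geo w t - Z.of_nat t).
Proof.
  intros H. induction t; simpl geo.
  - simpl. apply Z.divide_0_r.
  - replace (geo w t + w ^ Z.of_nat t - Z.of_nat (S t)) with
      ((geo w t - Z.of_nat t) + (w ^ Z.of_nat t - 1)) by lia.
    apply Z.divide_add_r; auto. apply dvd_pow_sub1'; auto.
Qed.

Lemma coprime_pow p x m : prime p -> 0 <= m -> ~ (p | x) -> rel_prime (p ^ m) x.
Proof.
  intros Hp Hm Hx.
  apply rel_prime_sym, rel_prime_Zpower_r; auto. apply rel_prime_sym, prime_rel_prime; auto.
Qed.

Lemma prime_div_pow p a n : prime p -> (p | a ^ Z.of_nat n) -> (p | a).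
Proof.
  intros Hp. induction n; intros H.
  - simpl in H. pose proof (prime_ge_2 p Hp). apply Z.divide_1_r_nonneg in H; lia.
  - rewrite pow_S in H. destruct (prime_mult p Hp _ _ H); auto.
Qed.

Lemma step_a p w t m : prime p -> (p | w - 1) -> ~ (p | Z.of_nat t) ->
  (p ^ m | w ^ Z.of_nat t - 1) -> 0 <= m -> (p ^ m | w - 1).
Proof.
  intros Hp H1 Ht H Hm. rewrite geo_id in H.
  apply Gauss with (geo w t).
  - rewrite Z.mul_comm; auto.
  - apply coprime_pow; auto. intros Hg. apply Ht.
    replace (Z.of_nat t) with (geo w t - (geo w t - Z.of_nat t)) by lia.
    apply Z.divide_sub_r; auto. apply geo_mod; auto.
Qed.

Fixpoint gsum (w : Z) (n : nat) : Z :=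
  match n with O => 0 | S n => gsum w n + geo w n end.

Lemma gsum_id w n : geo w n - Z.of_nat n = (w - 1) * gsum w n.
Proof.
  induction n. - simpl. ring.
  - cbn [gsum geo]. rewrite Nat2Z.inj_succ. pose proof (geo_id w n). lia.
Qed.

Lemma gsum_mod p w n : (p | w - 1) -> (p | 2 * gsum w n - Z.of_nat n * (Z.of_nat n - 1)).
Proof.
  intros H. induction n; simpl gsum.
  - simpl. apply Z.divide_0_r.
  - rewrite Nat2Z.inj_succ.
    replace (2 * (gsum w n + geo w n) - Z.succ (Z.of_nat n) * (Z.succ (Z.of_nat n) - 1)) with
      ((2 * gsum w n - Z.of_nat n * (Z.of_nat n - 1)) + 2 * (geo w n - Z.of_nat n)) by lia.
    apply Z.divide_add_r; auto. apply Z.divide_mul_r. apply geo_mod; auto.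
Qed.

Lemma dvd_mul2 a b c d : (a | b) -> (c | d) -> (a * c | b * d).
Proof. intros H1 H2. apply Z.divide_trans with (b * c).
  - apply Z.mul_divide_mono_r; auto. - apply Z.mul_divide_mono_l; auto. Qed.

Definition p0 (p : Z) := if Z.eqb p 2 then 4 else p.

Lemma p_div_p0 p : (p | p0 p).
Proof. unfold p0. destruct (Z.eqb_spec p 2). - subst. exists 2. lia. - apply Z.divide_refl. Qed.

Lemma S_sq p w : prime p -> (p0 p | w - 1) -> (p * p | geo w (Z.to_nat p) - p).
Proof.
  intros Hp H. pose proof (prime_ge_2 p Hp). unfold p0 in H.
  destruct (Z.eqb_spec p 2) as [->|Hne].
  - change (Z.to_nat 2) with 2%nat. cbn [geo]. change (Z.of_nat 0) with 0. change (Z.of_nat 1) with 1.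
    rewrite Z.pow_0_r, Z.pow_1_r. replace (0 + 1 + w - 2) with (w - 1) by lia. auto.
  - assert (E : geo w (Z.to_nat p) - p = (w - 1) * gsum w (Z.to_nat p)).
    { rewrite <- gsum_id. lia. }
    rewrite E. apply dvd_mul2; auto.
    pose proof (gsum_mod p w (Z.to_nat p) H) as G. rewrite Z2Nat.id in G by lia.
    assert (G2 : (p | 2 * gsum w (Z.to_nat p))).
    { replace (2 * gsum w (Z.to_nat p)) with
        ((2 * gsum w (Z.to_nat p) - p * (p - 1)) + p * (p - 1)) by lia.
      apply Z.divide_add_r; auto. apply Z.divide_factor_l. }
    destruct (prime_mult p Hp _ _ G2) as [G3|G3]; auto.
    apply Z.divide_pos_le in G3; [|lia]. lia.
Qed.

Lemma step_b p w m : prime p -> (p0 p | w - 1) -> 0 <= m ->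
  (p ^ (m + 1) | w ^ p - 1) -> (p ^ m | w - 1).
Proof.
  intros Hp H Hm Hd. pose proof (prime_ge_2 p Hp).
  destruct (S_sq p w Hp H) as [c Hc].
  assert (Ew : w ^ p - 1 = (w - 1) * p * (1 + c * p)).
  { replace (w ^ p) with (w ^ Z.of_nat (Z.to_nat p)) by (rewrite Z2Nat.id; lia).
    rewrite geo_id. nia. }
  rewrite Ew, Z.pow_add_r, Z.pow_1_r in Hd by lia.
  replace ((w - 1) * p * (1 + c * p)) with (p * ((1 + c * p) * (w - 1))) in Hd by ring.
  rewrite Z.mul_comm in Hd. apply Z.mul_divide_cancel_l in Hd; [|lia].
  apply Gauss in Hd; auto. apply coprime_pow; auto.
  intros Hc1. apply (Z.divide_add_r p (1 + c * p) (- c * p)) in Hc1;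
    [|exists (-c); ring].
  replace (1 + c * p + - c * p) with 1 in Hc1 by ring.
  apply Z.divide_pos_le in Hc1; lia.
Qed.

Lemma LTE p : prime p -> forall k : nat, (1 <= k)%nat ->
  exists s : nat, (p ^ Z.of_nat s | Z.of_nat k) /\
    forall (m : nat) w, (p0 p | w - 1) -> (p ^ Z.of_nat m | w ^ Z.of_nat k - 1) ->
      (p ^ Z.of_nat (m - s) | w - 1).
Proof.
  intros Hp. pose proof (prime_ge_2 p Hp).
  intro k. induction k as [k IH] using (well_founded_induction lt_wf). intros Hk.
  destruct (Zdivide_dec p (Z.of_nat k)) as [Hpk|Hpk].
  - destruct Hpk as [k0 Hk0].
    assert (Hk0p : 1 <= k0) by nia.
    assert (Hlt : (Z.to_nat k0 < k)%nat) by nia.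
    destruct (IH _ Hlt ltac:(lia)) as [s [Hs1 Hs2]].
    exists (S s). split.
    + rewrite Nat2Z.inj_succ, Z.pow_succ_r by lia. rewrite Hk0.
      rewrite Z2Nat.id in Hs1 by lia. rewrite (Z.mul_comm p). apply Z.mul_divide_mono_r. auto.
    + intros m w Hw Hm.
      assert (Hw' : (p0 p | w ^ p - 1)).
      { replace (w ^ p) with (w ^ Z.of_nat (Z.to_nat p)) by (rewrite Z2Nat.id; lia).
        apply dvd_pow_sub1'; auto. }
      assert (Hm' : (p ^ Z.of_nat m | (w ^ p) ^ Z.of_nat (Z.to_nat k0) - 1)).
      { rewrite <- Z.pow_mul_r by lia. rewrite Z2Nat.id by lia.
        replace (p * k0) with (Z.of_nat k) by lia. auto. }
      specialize (Hs2 m (w ^ p) Hw' Hm').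
      destruct (Nat.le_gt_cases m s) as [Hms|Hms].
      * replace (m - S s)%nat with 0%nat by lia. simpl. apply Z.divide_1_l.
      * apply step_b; auto; [lia|].
        replace (Z.of_nat (m - S s) + 1) with (Z.of_nat (m - s)) by lia. auto.
  - exists 0%nat. split; [simpl; apply Z.divide_1_l|].
    intros m w Hw Hm. rewrite Nat.sub_0_r.
    apply step_a with k; auto; [|lia].
    eapply Z.divide_trans; [apply p_div_p0|exact Hw].
Qed.

Open Scope Z_scope.

Fixpoint ev (c : list Z) (x : Z) : Z :=
  match c with [] => 0 | a :: c' => a + x * ev c' x end.

Lemma poly_div c r : (2 <= length c)%nat ->
  exists q, length q = (length c - 1)%nat /\ last q 0 = last c 0 /\
    forall x, ev c x = (x - r) * ev q x + ev c r.
Proof.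
  induction c as [|a c IH]; intros Hl; simpl in Hl; [lia|].
  destruct c as [|b c]; [simpl in Hl; lia|].
  destruct c as [|b' c].
  - exists [b]. simpl. repeat split; auto. intros x. ring.
  - destruct (IH ltac:(simpl; lia)) as [q [Hq1 [Hq2 Hq3]]].
    exists (ev (b :: b' :: c) r :: q). split; [simpl in *; lia|]. split.
    + destruct q as [|q0 q]; [simpl in Hq1; lia|]. simpl. simpl in Hq2. exact Hq2.
    + intros x. change (ev (a :: b :: b' :: c) x) with (a + x * ev (b :: b' :: c) x).
      change (ev (a :: b :: b' :: c) r) with (a + r * ev (b :: b' :: c) r).
      change (ev (ev (b :: b' :: c) r :: q) x) with (ev (b :: b' :: c) r + x * ev q x).
      rewrite (Hq3 x). ring.
Qed.

Lemma root_bound p : prime p -> forall n c, length c = S n -> last c 0 = 1 ->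
  (cnt (fun z => Z.eqb (ev c z mod p) 0) (zseq 0 p) <= n)%nat.
Proof.
  intros Hp. pose proof (prime_ge_2 p Hp). induction n; intros c Hl Hlast.
  - destruct c as [|a c]; [simpl in Hl; lia|]. destruct c; [|simpl in Hl; lia].
    simpl in Hlast. subst a. rewrite cnt_zero; [lia|].
    intros x _. cbn [ev]. rewrite Z.mul_0_r, Z.add_0_r, Z.mod_1_l by lia. reflexivity.
  - destruct (poly_div c 0 ltac:(lia)) as [_ _].
    set (F := filter (fun z => Z.eqb (ev c z mod p) 0) (zseq 0 p)).
    unfold cnt. fold F. destruct F as [|r F'] eqn:EF; [simpl; lia|].
    assert (Hr : In r F) by (rewrite EF; left; auto).
    destruct (poly_div c r ltac:(lia)) as [q [Hq1 [Hq2 Hq3]]].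
    assert (IHq := IHn q ltac:(lia) ltac:(congruence)).
    rewrite <- EF.
    apply Nat.le_trans with (length (r :: filter (fun z => Z.eqb (ev q z mod p) 0) (zseq 0 p))).
    + apply NoDup_incl_length; [apply NoDup_filter, zseq_NoDup|].
      intros z Hz. unfold F in Hz, Hr. apply filter_In in Hz, Hr.
      destruct Hz as [Hz1 Hz2]; destruct Hr as [Hr1 Hr2].
      apply modeq0 in Hz2, Hr2; try lia. apply in_zseq in Hz1, Hr1.
      rewrite Hq3 in Hz2.
      assert (Hd : (p | (z - r) * ev q z)).
      { replace ((z - r) * ev q z) with ((z - r) * ev q z + ev c r - ev c r) by ring.
        apply Z.divide_sub_r; auto. }
      destruct (prime_mult p Hp _ _ Hd) as [Hd1|Hd1].
      * left. apply div_small0 in Hd1; lia.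
      * right. apply filter_In. split; [apply in_zseq; lia|]. apply modeq0; auto; lia.
    + simpl. unfold cnt in IHq. lia.
Qed.

Lemma ev_mono j x : ev (repeat 0 j ++ [1]) x = x ^ Z.of_nat j.
Proof.
  induction j; cbn [ev repeat app]. - rewrite Z.pow_0_r. ring.
  - rewrite IHj. rewrite pow_S. ring.
Qed.

Definition cpoly (k : nat) : list Z := (-1) :: repeat 0 (k - 1) ++ [1].

Lemma ev_cpoly k x : (1 <= k)%nat -> ev (cpoly k) x = x ^ Z.of_nat k - 1.
Proof.
  intros Hk. unfold cpoly. cbn [ev]. rewrite ev_mono.
  replace k with (S (k - 1)) at 2 by lia. rewrite pow_S. ring.
Qed.

Lemma roots_mod_p p k : prime p -> (1 <= k)%nat ->
  (cnt (fun z => Z.eqb ((z ^ Z.of_nat k - 1) mod p) 0) (zseq 0 p) <= k)%nat.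
Proof.
  intros Hp Hk.
  assert (E : cnt (fun z => Z.eqb ((z ^ Z.of_nat k - 1) mod p) 0) (zseq 0 p) =
              cnt (fun z => Z.eqb (ev (cpoly k) z mod p) 0) (zseq 0 p)).
  { unfold cnt. f_equal. apply filter_ext. intros z. rewrite ev_cpoly; auto. }
  rewrite E. apply root_bound; auto.
  - unfold cpoly. simpl. rewrite length_app, repeat_length. simpl. lia.
  - unfold cpoly. rewrite app_comm_cons. apply last_last.
Qed.

Open Scope Z_scope.

Definition rootp (k : nat) (q : Z) (z : Z) : bool := Z.eqb ((z ^ Z.of_nat k - 1) mod q) 0.
Definition rho (k : nat) (q : Z) : nat := cnt (rootp k q) (zseq 0 q).

Lemma pow_pos_nat p n : 0 < p -> 0 < p ^ Z.of_nat n.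
Proof. intros. apply Z.pow_pos_nonneg; lia. Qed.

Lemma pow_dvd_le p a b : (a <= b)%nat -> (p ^ Z.of_nat a | p ^ Z.of_nat b).
Proof.
  intros H. exists (p ^ Z.of_nat (b - a)). rewrite <- Z.pow_add_r by lia. f_equal. lia.
Qed.

Lemma key_claim p k m z z' : prime p -> (1 <= k)%nat -> (1 <= m)%nat ->
  (p0 p | p ^ Z.of_nat m) ->
  (p ^ Z.of_nat m | z ^ Z.of_nat k - 1) -> (p ^ Z.of_nat m | z' ^ Z.of_nat k - 1) ->
  (p0 p | z - z') ->
  forall s, (forall (m : nat) w, (p0 p | w - 1) -> (p ^ Z.of_nat m | w ^ Z.of_nat k - 1) ->
      (p ^ Z.of_nat (m - s) | w - 1)) ->
  (p ^ Z.of_nat (m - s) | z' - z).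
Proof.
  intros Hp Hk Hm H0 Hz Hz' Hzz s HL. set (q := p ^ Z.of_nat m) in *.
  pose proof (prime_ge_2 p Hp).
  assert (Hpq : (p | q)).
  { unfold q. replace m with (S (m - 1)) by lia. rewrite pow_S. apply Z.divide_factor_l. }
  assert (Hnz : ~ (p | z)).
  { intros Hpz. assert (Hpk : (p | z ^ Z.of_nat k)).
    { replace k with (S (k - 1)) by lia. rewrite pow_S. apply Z.divide_mul_l; auto. }
    assert (Hp1 : (p | 1)).
    { replace 1 with (z ^ Z.of_nat k - (z ^ Z.of_nat k - 1)) by ring.
      apply Z.divide_sub_r; [exact Hpk| apply Z.divide_trans with q; auto]. }
    apply Z.divide_pos_le in Hp1; lia. }
  destruct (rel_prime_bezout _ _ (coprime_pow p z (Z.of_nat m) Hp ltac:(lia) Hnz)) as [u b Hub].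
  fold q in Hub.
  set (w := z' * b).
  assert (Hw1 : (p0 p | w - 1)).
  { replace (w - 1) with (b * (z' - z) - u * q) by (unfold w; lia).
    apply Z.divide_sub_r; apply Z.divide_mul_r; auto.
    replace (z' - z) with (- (z - z')) by ring. apply Z.divide_opp_r; auto. }
  assert (Hwk : (q | w ^ Z.of_nat k - 1)).
  { unfold w. rewrite Z.pow_mul_l.
    replace (z' ^ Z.of_nat k * b ^ Z.of_nat k - 1) with
      (b ^ Z.of_nat k * (z' ^ Z.of_nat k - 1) - b ^ Z.of_nat k * (z ^ Z.of_nat k - 1)
       + ((b * z) ^ Z.of_nat k - 1)) by (rewrite Z.pow_mul_l; ring).
    apply Z.divide_add_r; [apply Z.divide_sub_r; apply Z.divide_mul_r; auto|].
    apply dvd_pow_sub1'. exists (- u). lia. }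
  specialize (HL m w Hw1 Hwk).
  replace (z' - z) with (z' * u * q + (w - 1) * z).
  2:{ unfold w. transitivity (z' * (u * q + b * z) - z); [ring|]. rewrite Hub. ring. }
  apply Z.divide_add_r; [|apply Z.divide_mul_l; auto].
  apply Z.divide_mul_r. unfold q. apply pow_dvd_le. lia.
Qed.

Lemma dvd_pow_diff a b n : (a - b | a ^ Z.of_nat n - b ^ Z.of_nat n).
Proof.
  induction n.
  - simpl. replace (1 - 1) with 0 by ring. apply Z.divide_0_r.
  - rewrite !pow_S.
    replace (a * a ^ Z.of_nat n - b * b ^ Z.of_nat n) with
      (a * (a ^ Z.of_nat n - b ^ Z.of_nat n) + (a - b) * b ^ Z.of_nat n) by ring.
    apply Z.divide_add_r; [apply Z.divide_mul_r; auto|apply Z.divide_factor_l].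
Qed.

Lemma rho_pp p k m : prime p -> (1 <= k)%nat ->
  (rho k (p ^ Z.of_nat m) <= 4 * k * k)%nat.
Proof.
  intros Hp Hk. pose proof (prime_ge_2 p Hp).
  set (q := p ^ Z.of_nat m).
  assert (Hq : 0 < q) by (apply pow_pos_nat; lia).
  assert (Htriv : (rho k q <= Z.to_nat q)%nat).
  { unfold rho. rewrite <- (zseq_length 0 q). apply cnt_length. }
  destruct m as [|m].
  { assert (Z.to_nat q = 1%nat) by (unfold q; reflexivity). lia. }
  assert (Hsmall : p = 2 /\ m = 0%nat \/ (p0 p | q)).
  { unfold p0. destruct (Z.eqb_spec p 2) as [->|Hne].
    - destruct m as [|m]; [left; auto|right].
      change 4 with (2 ^ Z.of_nat 2). apply pow_dvd_le. lia.
    - right. unfold q. rewrite pow_S. apply Z.divide_factor_l. }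
  destruct Hsmall as [[-> ->]|Hp0q].
  { assert (Z.to_nat q = 2%nat) by (unfold q; reflexivity). lia. }
  destruct (LTE p Hp k Hk) as [s [Hs1 Hs2]].
  assert (Hsk : p ^ Z.of_nat s <= Z.of_nat k) by (apply Zdivide_le; auto; try lia; apply pow_pos_nat; lia).
  assert (Hp0pos : 0 < p0 p) by (unfold p0; destruct (Z.eqb p 2); lia).
  set (R0 := filter (rootp k (p0 p)) (zseq 0 (p0 p))).
  set (Q := p ^ Z.of_nat (S m - s)).
  assert (HQ : 0 < Q) by (apply pow_pos_nat; lia).
  unfold rho.
  eapply Nat.le_trans.
  { apply (cnt_cover _ (fun r z => rootp k q z && Z.eqb ((z - r) mod p0 p) 0)%bool R0).
    intros z Hz Hr. exists (z mod p0 p). split.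
    - unfold R0. apply filter_In. split.
      + apply in_zseq. pose proof (Z.mod_pos_bound z (p0 p) Hp0pos). lia.
      + unfold rootp in *. apply modeq0 in Hr; [|lia]. apply modeq0; [lia|].
        replace ((z mod p0 p) ^ Z.of_nat k - 1) with
          ((z ^ Z.of_nat k - 1) - (z ^ Z.of_nat k - (z mod p0 p) ^ Z.of_nat k)) by ring.
        apply Z.divide_sub_r; [eapply Z.divide_trans; eauto|].
        eapply Z.divide_trans; [|apply dvd_pow_diff].
        rewrite Z.mod_eq by lia. exists (z / p0 p). ring.
    - rewrite Hr. simpl. apply modeq0; [lia|]. rewrite Z.mod_eq by lia. exists (z / p0 p). ring. }
  apply Nat.le_trans with (lsum (fun _ => Z.to_nat (p ^ Z.of_nat s)) R0).
  { apply lsum_le. intros r Hr.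
    rewrite <- (zseq_length 0 (p ^ Z.of_nat s)). unfold cnt.
    apply (cnt_inj (fun z => z / Q)).
    - apply NoDup_filter, zseq_NoDup.
    - intros z Hz. apply filter_In in Hz. destruct Hz as [Hz _]. apply in_zseq in Hz.
      apply in_zseq. split; [apply Z.div_pos; lia|].
      assert (z < Q * p ^ Z.of_nat s).
      { unfold Q. rewrite <- Z.pow_add_r by lia.
        assert (q <= p ^ (Z.of_nat (S m - s) + Z.of_nat s)).
        { unfold q. apply Z.pow_le_mono_r; lia. }
        lia. }
      assert (z / Q < p ^ Z.of_nat s) by (apply Z.div_lt_upper_bound; lia). lia.
    - intros z z' Hz Hz' E. apply filter_In in Hz, Hz'.
      destruct Hz as [Hz1 Hz2]; destruct Hz' as [Hz1' Hz2'].
      apply andb_prop in Hz2, Hz2'. destruct Hz2 as [Hz2 Hz3]; destruct Hz2' as [Hz2' Hz3'].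
      unfold rootp in Hz2, Hz2'. apply modeq0 in Hz2, Hz2', Hz3, Hz3'; try lia.
      assert (Hd : (Q | z' - z)).
      { apply (key_claim p k (S m) z z' Hp Hk ltac:(lia) Hp0q Hz2 Hz2'); auto.
        replace (z - z') with ((z - r) - (z' - r)) by ring. apply Z.divide_sub_r; auto. }
      assert (Hm : z' mod Q = z mod Q).
      { apply div_sub_mod; auto. }
      pose proof (Z.div_mod z Q ltac:(lia)). pose proof (Z.div_mod z' Q ltac:(lia)). lia. }
  rewrite lsum_const.
  assert (HR0 : (length R0 <= Nat.max k 4)%nat).
  { unfold R0, p0. destruct (Z.eqb_spec p 2).
    - apply Nat.le_trans with (length (zseq 0 4)); [apply filter_length_le|].
      rewrite zseq_length. simpl. lia.
    - apply Nat.le_trans with k; [|lia]. apply roots_mod_p; auto. }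
  assert (Hs' : (Z.to_nat (p ^ Z.of_nat s) <= k)%nat) by lia.
  destruct (Nat.max_spec k 4) as [[_ Hm]|[_ Hm]]; rewrite Hm in HR0; nia.
Qed.

Open Scope Z_scope.

Lemma coprime_mul_dvd a b n : Z.gcd a b = 1 -> (a | n) -> (b | n) -> (a * b | n).
Proof.
  intros Hg [c Hc] Hb. subst n.
  assert (Hbc : (b | c)).
  { apply Gauss with a; [rewrite Z.mul_comm; auto|]. apply rel_prime_sym, Zgcd_1_rel_prime; auto. }
  destruct Hbc as [e He]. subst c. exists e. ring.
Qed.

Lemma rho_mul k a b : 1 <= a -> 1 <= b -> Z.gcd a b = 1 ->
  (rho k (a * b) <= rho k a * rho k b)%nat.
Proof.
  intros Ha Hb Hg. unfold rho, cnt. rewrite <- length_prod.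
  apply (cnt_inj (fun z => (z mod a, z mod b))).
  - apply NoDup_filter, zseq_NoDup.
  - intros z Hz. apply filter_In in Hz. destruct Hz as [Hz1 Hz2]. apply in_zseq in Hz1.
    unfold rootp in Hz2. apply modeq0 in Hz2; [|lia].
    apply in_prod; apply filter_In; split;
      try (apply in_zseq; apply Z.mod_pos_bound; lia); unfold rootp; apply modeq0; try lia.
    + replace ((z mod a) ^ Z.of_nat k - 1) with
        ((z ^ Z.of_nat k - 1) - (z ^ Z.of_nat k - (z mod a) ^ Z.of_nat k)) by ring.
      apply Z.divide_sub_r; [apply Z.divide_trans with (a * b); auto; apply Z.divide_factor_l|].
      eapply Z.divide_trans; [|apply dvd_pow_diff]. rewrite Z.mod_eq by lia. exists (z / a). ring.
    + replace ((z mod b) ^ Z.of_nat k - 1) with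
        ((z ^ Z.of_nat k - 1) - (z ^ Z.of_nat k - (z mod b) ^ Z.of_nat k)) by ring.
      apply Z.divide_sub_r; [apply Z.divide_trans with (a * b); auto; apply Z.divide_factor_r|].
      eapply Z.divide_trans; [|apply dvd_pow_diff]. rewrite Z.mod_eq by lia. exists (z / b). ring.
  - intros z z' Hz Hz' E. injection E as E1 E2.
    apply filter_In in Hz, Hz'. destruct Hz as [Hz _]; destruct Hz' as [Hz' _].
    apply in_zseq in Hz, Hz'.
    assert (Hd : (a * b | z - z')).
    { apply coprime_mul_dvd; auto.
      - rewrite (Z.div_mod z a), (Z.div_mod z' a) by lia. rewrite E1. exists (z / a - z' / a). ring.
      - rewrite (Z.div_mod z b), (Z.div_mod z' b) by lia. rewrite E2. exists (z / b - z' / b). ring. }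
    apply div_small0 in Hd; [lia|]. nia.
Qed.

Definition divs (n : Z) : list Z := filter (fun g => Z.eqb (n mod g) 0) (zseq 1 n).
Definition tau (n : Z) : nat := length (divs n).

Lemma in_divs n g : 1 <= n -> In g (divs n) <-> 1 <= g <= n /\ (g | n).
Proof.
  intros Hn. unfold divs. rewrite filter_In, in_zseq. split.
  - intros [H1 H2]. apply modeq0 in H2; [|lia]. split; [lia|auto].
  - intros [H1 H2]. split; [lia|]. apply modeq0; auto; lia.
Qed.

Lemma gcd_split g a b : 1 <= g -> 1 <= a -> 1 <= b -> Z.gcd a b = 1 -> (g | a * b) ->
  g = Z.gcd g a * Z.gcd g b.
Proof.
  intros Hg Ha Hb Hab Hd.
  apply Z.divide_antisym_nonneg; [lia| | |].
  - pose proof (Z.gcd_nonneg g a); pose proof (Z.gcd_nonneg g b). nia.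
  - apply Z.divide_trans with (Z.gcd (g * Z.gcd g b) (a * Z.gcd g b)).
    + apply Z.gcd_greatest; [apply Z.divide_factor_l|].
      rewrite <- Z.gcd_mul_mono_l_nonneg by lia.
      apply Z.gcd_greatest; [apply Z.divide_factor_r|auto].
    + rewrite Z.gcd_mul_mono_r_nonneg by (apply Z.gcd_nonneg). apply Z.divide_refl.
  - apply coprime_mul_dvd; [|apply Z.gcd_divide_l|apply Z.gcd_divide_l].
    apply Z.gcd_unique; try lia.
    + apply Z.divide_1_l. + apply Z.divide_1_l.
    + intros q H1 H2. rewrite <- Hab. apply Z.gcd_greatest.
      * eapply Z.divide_trans; [apply H1|apply Z.gcd_divide_r].
      * eapply Z.divide_trans; [apply H2|apply Z.gcd_divide_r].
Qed.

Lemma tau_mul a b : 1 <= a -> 1 <= b -> Z.gcd a b = 1 -> (tau (a * b) <= tau a * tau b)%nat.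
Proof.
  intros Ha Hb Hab. unfold tau. rewrite <- length_prod.
  apply (cnt_inj (fun g => (Z.gcd g a, Z.gcd g b))).
  - apply NoDup_filter, zseq_NoDup.
  - intros g Hg. apply in_divs in Hg; [|nia]. destruct Hg as [Hg1 Hg2].
    apply in_prod; apply in_divs; auto.
    + split; [|apply Z.gcd_divide_r]. split.
      * assert (Z.gcd g a <> 0) by (rewrite Z.gcd_eq_0; lia). pose proof (Z.gcd_nonneg g a). lia.
      * apply Z.divide_pos_le; [lia|apply Z.gcd_divide_r].
    + split; [|apply Z.gcd_divide_r]. split.
      * assert (Z.gcd g b <> 0) by (rewrite Z.gcd_eq_0; lia). pose proof (Z.gcd_nonneg g b). lia.
      * apply Z.divide_pos_le; [lia|apply Z.gcd_divide_r].
  - intros g g' Hg Hg' E. injection E as E1 E2.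
    apply in_divs in Hg, Hg'; try nia.
    rewrite (gcd_split g a b), (gcd_split g' a b) by (tauto || lia). congruence.
Qed.

Lemma tau_pp p m : prime p -> (tau (p ^ Z.of_nat m) <= S m)%nat.
Proof.
  intros Hp. pose proof (prime_ge_2 p Hp). unfold tau.
  assert (Hq : 1 <= p ^ Z.of_nat m) by (pose proof (pow_pos_nat p m); lia).
  apply Nat.le_trans with (length (map (fun i => p ^ Z.of_nat i) (seq 0 (S m))));
    [|rewrite length_map, length_seq; lia].
  apply NoDup_incl_length; [apply NoDup_filter, zseq_NoDup|].
  intros g Hg. apply in_divs in Hg; auto. destruct Hg as [Hg1 Hg2].
  destruct (Zdivide_power_2 g p (Z.of_nat m) ltac:(lia) ltac:(lia) Hp Hg2) as [j Hj].
  assert (Hj0 : 0 <= j).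
  { destruct (Z_lt_le_dec j 0); auto. rewrite Z.pow_neg_r in Hj by auto. lia. }
  assert (Hjm : j <= Z.of_nat m).
  { destruct (Z_le_gt_dec j (Z.of_nat m)); auto.
    assert (p ^ Z.of_nat m < p ^ j) by (apply Z.pow_lt_mono_r; lia). lia. }
  apply in_map_iff. exists (Z.to_nat j). split; [rewrite Z2Nat.id; auto|]. apply in_seq. lia.
Qed.

Open Scope Z_scope.

Lemma prime_factor n : 1 < n -> exists p, prime p /\ (p | n).
Proof.
  intros Hn. remember (Z.to_nat n) as N eqn:EN. revert n Hn EN.
  induction N as [N IH] using (well_founded_induction lt_wf). intros n Hn EN.
  destruct (prime_dec n) as [Hp|Hp].
  - exists n. split; auto. apply Z.divide_refl.
  - destruct (not_prime_divide n Hn Hp) as [d [Hd1 Hd2]].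
    destruct (IH (Z.to_nat d) ltac:(lia) d ltac:(lia) eq_refl) as [p [Hp1 Hp2]].
    exists p. split; auto. eapply Z.divide_trans; eauto.
Qed.

Lemma decomp p n : prime p -> 1 <= n ->
  exists (m : nat) n', n = p ^ Z.of_nat m * n' /\ 1 <= n' /\ ~ (p | n').
Proof.
  intros Hp Hn. pose proof (prime_ge_2 p Hp).
  remember (Z.to_nat n) as N eqn:EN. revert n Hn EN.
  induction N as [N IH] using (well_founded_induction lt_wf). intros n Hn EN.
  destruct (Zdivide_dec p n) as [[c Hc]|Hpn].
  - assert (1 <= c) by nia.
    destruct (IH (Z.to_nat c) ltac:(nia) c ltac:(lia) eq_refl) as [m [n' [E [H1 H2]]]].
    exists (S m), n'. split; auto. rewrite pow_S, Hc, E. ring.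
  - exists 0%nat, n. split; [change (Z.of_nat 0) with 0%Z; rewrite Z.pow_0_r; ring|]. auto.
Qed.

Open Scope R_scope.

Lemma Rpower_pos x y : 0 < Rpower x y.
Proof. unfold Rpower. apply exp_pos. Qed.

Lemma Rpower_1_base y : Rpower 1 y = 1.
Proof. unfold Rpower. rewrite ln_1, Rmult_0_r. apply exp_0. Qed.

Lemma Rpower_ppow p m d : (0 < p)%Z ->
  Rpower (IZR (p ^ Z.of_nat m)) d = Rpower (IZR p) (INR m * d).
Proof.
  intros Hp. rewrite <- pow_IZR, <- Rpower_pow by (apply IZR_lt; lia).
  apply Rpower_mult.
Qed.

Lemma Rpower_IZR_mul a b d : (0 < a)%Z -> (0 < b)%Z ->
  Rpower (IZR (a * b)) d = Rpower (IZR a) d * Rpower (IZR b) d.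
Proof.
  intros Ha Hb. rewrite mult_IZR. symmetry. apply Rpower_mult_distr; apply IZR_lt; lia.
Qed.

Lemma GL (f : Z -> nat) (dl K : R) (P0 : nat) :
  0 < dl -> 1 <= K ->
  (f 1%Z <= 1)%nat ->
  (forall a b, (1 <= a)%Z -> (1 <= b)%Z -> Z.gcd a b = 1%Z -> (f (a * b)%Z <= f a * f b)%nat) ->
  (forall p m, prime p -> INR (f (p ^ Z.of_nat m)%Z) <= K * Rpower (IZR p) (INR m * dl)) ->
  (forall p m, prime p -> (Z.of_nat P0 <= p)%Z ->
       INR (f (p ^ Z.of_nat m)%Z) <= Rpower (IZR p) (INR m * dl)) ->
  forall n, (1 <= n)%Z -> INR (f n) <= K ^ P0 * Rpower (IZR n) dl.
Proof.
  intros Hdl HK Hf1 Hmul H3 H4.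
  assert (Hsplit : forall p m n', prime p -> (1 <= n')%Z -> ~ (p | n')%Z ->
     INR (f (p ^ Z.of_nat m * n')%Z) <= INR (f (p ^ Z.of_nat m)%Z) * INR (f n')).
  { intros p m n' Hp Hn' Hpn. rewrite <- mult_INR. apply le_INR. pose proof (prime_ge_2 p Hp).
    apply Hmul; auto. pose proof (pow_pos_nat p m). lia.
    apply Zgcd_1_rel_prime. apply coprime_pow; auto; lia. }
  assert (Base : forall n, (1 <= n)%Z ->
     (forall p, prime p -> (p | n)%Z -> (p < Z.of_nat P0)%Z -> False) ->
     INR (f n) <= Rpower (IZR n) dl).
  { intros n Hn. remember (Z.to_nat n) as N eqn:EN. revert n Hn EN.
    induction N as [N IH] using (well_founded_induction lt_wf). intros n Hn EN Hyp.
    destruct (Z.eq_dec n 1) as [->|Hn1].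
    - rewrite Rpower_1_base. apply (le_INR _ 1) in Hf1. simpl in Hf1. lra.
    - destruct (prime_factor n ltac:(lia)) as [p [Hp Hpn]]. pose proof (prime_ge_2 p Hp).
      destruct (decomp p n Hp Hn) as [m [n' [E [Hn' Hpn']]]].
      destruct m as [|m]. { change (Z.of_nat 0) with 0%Z in E. rewrite Z.pow_0_r, Z.mul_1_l in E. subst. contradiction. }
      assert (Hpm : (2 <= p ^ Z.of_nat (S m))%Z).
      { rewrite pow_S. pose proof (pow_pos_nat p m). nia. }
      assert (Hlt : (n' < n)%Z) by nia.
      rewrite E. eapply Rle_trans; [apply Hsplit; auto|].
      rewrite Rpower_IZR_mul by lia. rewrite Rpower_ppow by lia.
      apply Rmult_le_compat; try apply pos_INR.
      + apply H4; auto. destruct (Z_lt_le_dec p (Z.of_nat P0)); auto. exfalso; eapply Hyp; eauto.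
      + apply (IH (Z.to_nat n')); auto. lia.
        intros q Hq Hqn Hq0. apply (Hyp q Hq); auto. rewrite E. apply Z.divide_mul_r; auto. }
  assert (Step : forall L : nat, forall n, (1 <= n)%Z ->
     (forall p, prime p -> (p | n)%Z -> (p < Z.of_nat P0)%Z -> (p < Z.of_nat L)%Z) ->
     INR (f n) <= K ^ L * Rpower (IZR n) dl).
  { induction L as [|L IHL]; intros n Hn Hyp.
    - simpl. rewrite Rmult_1_l. apply Base; auto. intros p Hp Hpn Hp0. specialize (Hyp p Hp Hpn Hp0). pose proof (prime_ge_2 p Hp). lia.
    - destruct (prime_dec (Z.of_nat L)) as [HL|HL];
        [destruct (Zdivide_dec (Z.of_nat L) n) as [HLn|HLn]|].
      + destruct (decomp (Z.of_nat L) n HL Hn) as [m [n' [E [Hn' Hpn']]]].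
        pose proof (prime_ge_2 _ HL).
        rewrite E. eapply Rle_trans; [apply Hsplit; auto|].
        rewrite Rpower_IZR_mul by (try apply pow_pos_nat; lia). rewrite Rpower_ppow by lia.
        replace (K ^ S L * (Rpower (IZR (Z.of_nat L)) (INR m * dl) * Rpower (IZR n') dl)) with
          ((K * Rpower (IZR (Z.of_nat L)) (INR m * dl)) * (K ^ L * Rpower (IZR n') dl)) by (simpl; ring).
        apply Rmult_le_compat; try apply pos_INR; auto.
        apply IHL; auto. intros q Hq Hqn Hq0.
        assert (Hqn2 : (q | n)%Z) by (rewrite E; apply Z.divide_mul_r; auto).
        specialize (Hyp q Hq Hqn2 Hq0).
        destruct (Z.eq_dec q (Z.of_nat L)); [subst; contradiction|lia].
      + eapply Rle_trans; [apply IHL; auto|].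
        * intros q Hq Hqn Hq0. specialize (Hyp q Hq Hqn Hq0).
          destruct (Z.eq_dec q (Z.of_nat L)); [subst; contradiction|lia].
        * simpl. pose proof (Rpower_pos (IZR n) dl). pose proof (pow_le K L ltac:(lra)).
          apply Rmult_le_compat_r; [lra|]. nra.
      + eapply Rle_trans; [apply IHL; auto|].
        * intros q Hq Hqn Hq0. specialize (Hyp q Hq Hqn Hq0).
          destruct (Z.eq_dec q (Z.of_nat L)); [subst; contradiction|lia].
        * simpl. pose proof (Rpower_pos (IZR n) dl). pose proof (pow_le K L ltac:(lra)).
          apply Rmult_le_compat_r; [lra|]. nra. }
  intros n Hn. apply Step; auto.
Qed.

Open Scope R_scope.

Lemma Rpower_ge1 x y : 1 <= x -> 0 <= y -> 1 <= Rpower x y.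
Proof. intros. rewrite <- (Rpower_O x) by lra. apply Rle_Rpower; auto. Qed.

Lemma rho1 k : (rho k 1 <= 1)%nat.
Proof. unfold rho. apply Nat.le_trans with (length (zseq 0 1)); [apply cnt_length|rewrite zseq_length; simpl; lia]. Qed.

Lemma tau1 : (tau 1 <= 1)%nat.
Proof. unfold tau, divs. apply Nat.le_trans with (length (zseq 1 1)); [apply filter_length_le|rewrite zseq_length; simpl; lia]. Qed.

Lemma pow2_ge m : (S m <= 2 ^ m)%nat.
Proof. induction m; simpl; lia. Qed.

Lemma rho_tau_bound k dl : (1 <= k)%nat -> 0 < dl -> exists C, 0 < C /\
  forall n, (1 <= n)%Z -> INR (rho k n) <= C * Rpower (IZR n) dl /\ INR (tau n) <= C * Rpower (IZR n) dl.
Proof.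
  intros Hk Hdl.
  set (c0 := INR (4 * k * k)).
  assert (Hc0 : 4 <= c0).
  { unfold c0. replace 4 with (INR 4) by (simpl; lra). apply le_INR. nia. }
  assert (Hln2 : 0 < ln 2) by (rewrite <- ln_1; apply ln_increasing; lra).
  set (K := Rmax c0 (/ (dl * ln 2))).
  assert (HK1 : c0 <= K) by apply Rmax_l.
  assert (HK2 : / (dl * ln 2) <= K) by apply Rmax_r.
  set (x0 := Rpower c0 (/ dl)).
  set (P0 := Z.to_nat (up x0)).
  assert (Hx0 : 0 < x0) by apply Rpower_pos.
  assert (HP0 : forall p : Z, (Z.of_nat P0 <= p)%Z -> c0 < Rpower (IZR p) dl).
  { intros p Hp. destruct (archimed x0) as [Hup _].
    assert (Hp' : x0 < IZR p).
    { apply Rlt_le_trans with (IZR (up x0)); [lra|]. apply IZR_le. unfold P0 in Hp.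
      assert (0 < up x0)%Z by (apply lt_IZR; lra). lia. }
    replace c0 with (Rpower x0 dl).
    - apply Rlt_Rpower_l; auto.
    - unfold x0. rewrite Rpower_mult. rewrite Rinv_l by lra. apply Rpower_1. lra. }
  assert (Hmain : forall f : Z -> nat, (f 1%Z <= 1)%nat ->
    (forall a b, (1 <= a)%Z -> (1 <= b)%Z -> Z.gcd a b = 1%Z -> (f (a * b)%Z <= f a * f b)%nat) ->
    (forall p m, prime p -> INR (f (p ^ Z.of_nat m)%Z) <= K * Rpower (IZR p) (INR m * dl)) ->
    (forall p m, prime p -> (Z.of_nat P0 <= p)%Z ->
       INR (f (p ^ Z.of_nat m)%Z) <= Rpower (IZR p) (INR m * dl)) ->
    forall n, (1 <= n)%Z -> INR (f n) <= K ^ P0 * Rpower (IZR n) dl).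
  { intros f H1 H2 H3 H4. apply GL; auto. lra. }
  exists (K ^ P0). split; [apply pow_lt; lra|].
  assert (Hpge : forall p : Z, prime p -> 2 <= IZR p).
  { intros p Hp. apply IZR_le. apply prime_ge_2; auto. }
  assert (Hpm_ge1 : forall p m, prime p -> 1 <= Rpower (IZR p) (INR m * dl)).
  { intros p m Hp. apply Rpower_ge1. pose proof (Hpge p Hp). lra.
    apply Rmult_le_pos; [apply pos_INR|lra]. }
  assert (Hpm_ge : forall p m, prime p -> (1 <= m)%nat ->
      Rpower (IZR p) dl <= Rpower (IZR p) (INR m * dl)).
  { intros p m Hp Hm. apply Rle_Rpower. pose proof (Hpge p Hp). lra.
    apply le_INR in Hm. simpl in Hm. nra. }
  intros n Hn. split.
  - apply (Hmain (rho k)); [ | | | | exact Hn].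
    + apply rho1.
    + intros a b Ha Hb Hab. apply rho_mul; auto.
    + intros p m Hp. eapply Rle_trans; [apply le_INR, rho_pp; auto|].
      fold c0. specialize (Hpm_ge1 p m Hp). nra.
    + intros p m Hp HpP. destruct m as [|m].
      * change (Z.of_nat 0) with 0%Z. rewrite Z.pow_0_r. simpl INR.
        rewrite Rmult_0_l, Rpower_O by (pose proof (Hpge p Hp); lra).
        pose proof (le_INR _ _ (rho1 k)) as Hr1; simpl in Hr1; lra.
      * eapply Rle_trans; [apply le_INR, rho_pp; auto|]. fold c0.
        specialize (HP0 p HpP). specialize (Hpm_ge p (S m) Hp ltac:(lia)). lra.
  - apply (Hmain tau); [ | | | | exact Hn].
    + apply tau1.
    + intros a b Ha Hb Hab. apply tau_mul; auto.
    + intros p m Hp. eapply Rle_trans; [apply le_INR, tau_pp; auto|].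
      rewrite S_INR.
      assert (E1 : 1 + INR m * dl * ln 2 <= Rpower (IZR p) (INR m * dl)).
      { eapply Rle_trans; [apply exp_ineq1_le|].
        replace (INR m * dl * ln 2) with (INR m * dl * ln 2) by ring.
        change (exp (INR m * dl * ln 2)) with (Rpower 2 (INR m * dl)).
        apply Rle_Rpower_l; [apply Rmult_le_pos; [apply pos_INR|lra]|].
        pose proof (Hpge p Hp). lra. }
      assert (Hm0 := pos_INR m).
      assert (HKd : 1 <= K * (dl * ln 2)).
      { apply Rmult_le_reg_r with (/ (dl * ln 2)).
        - apply Rinv_0_lt_compat. nra.
        - rewrite Rmult_assoc, Rinv_r by nra. lra. }
      nra.
    + intros p m Hp HpP. eapply Rle_trans; [apply le_INR, tau_pp; auto|].
      eapply Rle_trans; [apply le_INR, pow2_ge|]. rewrite pow_INR.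
      replace (INR m * dl) with (dl * INR m) by ring. rewrite <- Rpower_mult.
      rewrite Rpower_pow by apply Rpower_pos.
      apply pow_incr. simpl. specialize (HP0 p HpP). lra.
Qed.

Open Scope Z_scope.

Lemma div_cancel_gcd d G T : 1 <= d -> (d | G * T) -> (d / Z.gcd d G | T).
Proof.
  intros Hd H. set (h := Z.gcd d G).
  assert (Hh : 0 < h).
  { assert (h <> 0) by (unfold h; rewrite Z.gcd_eq_0; lia). pose proof (Z.gcd_nonneg d G). lia. }
  assert (E1 : d = h * (d / h)) by (apply Zdivide_Zdiv_eq; auto; apply Z.gcd_divide_l).
  assert (E2 : G = h * (G / h)) by (apply Zdivide_Zdiv_eq; auto; apply Z.gcd_divide_r).
  assert (Hc : Z.gcd (d / h) (G / h) = 1) by (apply Z.gcd_div_gcd; auto; lia).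
  apply Gauss with (G / h).
  - rewrite E1, E2 in H. rewrite <- Z.mul_assoc in H. apply Z.mul_divide_cancel_l in H; [|lia]. auto.
  - apply Zgcd_1_rel_prime; auto.
Qed.

Lemma pair_decomp k u v d : (1 <= k)%nat -> 1 <= d -> (d | u ^ Z.of_nat k - v ^ Z.of_nat k) ->
  let g := Z.gcd (Z.gcd u v) d in let dp := d / Z.gcd d (g ^ Z.of_nat k) in
  1 <= g <= d /\ (g | d) /\ (g | u) /\ (g | v) /\ Z.gcd (u / g) dp = 1 /\
  (dp | (u / g) ^ Z.of_nat k - (v / g) ^ Z.of_nat k).
Proof.
  intros Hk Hd Hdiv g dp.
  assert (Hg0 : 1 <= g).
  { assert (g <> 0) by (unfold g; rewrite Z.gcd_eq_0; lia). pose proof (Z.gcd_nonneg (Z.gcd u v) d). unfold g in *. lia. }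
  assert (Hgd : (g | d)) by apply Z.gcd_divide_r.
  assert (Hgu : (g | u)) by (eapply Z.divide_trans; [apply Z.gcd_divide_l|apply Z.gcd_divide_l]).
  assert (Hgv : (g | v)) by (eapply Z.divide_trans; [apply Z.gcd_divide_l|apply Z.gcd_divide_r]).
  assert (Eu : u = g * (u / g)) by (apply Zdivide_Zdiv_eq; auto; lia).
  assert (Ev : v = g * (v / g)) by (apply Zdivide_Zdiv_eq; auto; lia).
  set (u1 := u / g) in *. set (v1 := v / g) in *.
  assert (Hb : (dp | u1 ^ Z.of_nat k - v1 ^ Z.of_nat k)).
  { unfold dp. apply div_cancel_gcd; auto.
    replace (g ^ Z.of_nat k * (u1 ^ Z.of_nat k - v1 ^ Z.of_nat k)) with
      ((g * u1) ^ Z.of_nat k - (g * v1) ^ Z.of_nat k) by (rewrite !Z.pow_mul_l; ring).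
    rewrite <- Eu, <- Ev. auto. }
  assert (Hgk : (g | g ^ Z.of_nat k)).
  { replace k with (S (k - 1)) by lia. rewrite pow_S. apply Z.divide_factor_l. }
  set (h := Z.gcd d (g ^ Z.of_nat k)) in *.
  assert (Hh : 0 < h).
  { assert (h <> 0) by (unfold h; rewrite Z.gcd_eq_0; lia). pose proof (Z.gcd_nonneg d (g ^ Z.of_nat k)). lia. }
  assert (Ed : d = h * dp) by (apply Zdivide_Zdiv_eq; auto; apply Z.gcd_divide_l).
  assert (Hgh : (g | h)) by (apply Z.gcd_greatest; auto).
  assert (Hg_le : g <= d) by (apply Z.divide_pos_le; auto; lia).
  repeat split; auto; try lia.
  destruct (Z.eq_dec (Z.gcd u1 dp) 1) as [|Hne]; auto. exfalso.
  assert (Hdp : 1 <= dp) by nia.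
  assert (Hc1 : 1 < Z.gcd u1 dp).
  { assert (Z.gcd u1 dp <> 0) by (rewrite Z.gcd_eq_0; lia). pose proof (Z.gcd_nonneg u1 dp). lia. }
  destruct (prime_factor _ Hc1) as [p [Hp Hpc]]. pose proof (prime_ge_2 p Hp).
  assert (Hpu : (p | u1)) by (eapply Z.divide_trans; [apply Hpc|apply Z.gcd_divide_l]).
  assert (Hpd : (p | dp)) by (eapply Z.divide_trans; [apply Hpc|apply Z.gcd_divide_r]).
  destruct (Zdivide_dec p v1) as [Hpv|Hpv].
  - destruct (Zdivide_dec (p * g) d) as [Hpgd|Hpgd].
    + assert (Hpgg : (p * g | g)).
      { apply Z.gcd_greatest; auto. apply Z.gcd_greatest.
        - rewrite Eu, Z.mul_comm. apply Z.mul_divide_mono_l; auto.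
        - rewrite Ev, Z.mul_comm. apply Z.mul_divide_mono_l; auto. }
      destruct Hpgg as [e He].
      assert (E0 : g * (e * p - 1) = 0) by (rewrite Z.mul_sub_distr_l; nia).
      apply Z.mul_eq_0 in E0. destruct E0 as [E0|E0]; [lia|].
      destruct (Z_le_gt_dec e 0); nia.
    + apply Hpgd. destruct Hgh as [h0 Hh0]. rewrite Ed, Hh0.
      destruct Hpd as [f Hf]. rewrite Hf. exists (h0 * f). ring.
  - apply Hpv. apply (prime_div_pow p v1 k Hp).
    assert (HpT : (p | u1 ^ Z.of_nat k - v1 ^ Z.of_nat k)) by (eapply Z.divide_trans; eauto).
    replace (v1 ^ Z.of_nat k) with (u1 ^ Z.of_nat k - (u1 ^ Z.of_nat k - v1 ^ Z.of_nat k)) by ring.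
    apply Z.divide_sub_r; auto.
    replace k with (S (k - 1)) by lia. rewrite pow_S. apply Z.divide_mul_l; auto.
Qed.

Lemma size_ineq k g d : (2 <= k)%nat -> 1 <= g -> 1 <= d ->
  d ^ 2 <= (g ^ 2 * (d / Z.gcd d (g ^ Z.of_nat k))) ^ Z.of_nat k.
Proof.
  intros Hk Hg Hd. set (h := Z.gcd d (g ^ Z.of_nat k)).
  assert (Hgk : 1 <= g ^ Z.of_nat k) by (pose proof (pow_pos_nat g k); lia).
  assert (Hh : 0 < h).
  { assert (h <> 0) by (unfold h; rewrite Z.gcd_eq_0; lia). pose proof (Z.gcd_nonneg d (g ^ Z.of_nat k)). lia. }
  assert (Ed : d = h * (d / h)) by (apply Zdivide_Zdiv_eq; auto; apply Z.gcd_divide_l).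
  set (dp := d / h) in *.
  assert (Hdp : 1 <= dp) by nia.
  assert (Hhg : h <= g ^ Z.of_nat k) by (apply Z.divide_pos_le; [lia|apply Z.gcd_divide_r]).
  rewrite Z.pow_mul_l. rewrite <- Z.pow_mul_r by lia.
  replace (2 * Z.of_nat k) with (Z.of_nat k * 2) by lia. rewrite Z.pow_mul_r by lia.
  assert (Hdpk : dp ^ 2 <= dp ^ Z.of_nat k) by (apply Z.pow_le_mono_r; lia).
  rewrite Ed, Z.pow_mul_l.
  assert (h ^ 2 <= (g ^ Z.of_nat k) ^ 2) by (apply Z.pow_le_mono_l; lia).
  assert (0 <= h ^ 2) by (apply Z.pow_nonneg; lia).
  assert (0 <= dp ^ 2) by (apply Z.pow_nonneg; lia).
  nia.
Qed.

Open Scope Z_scope.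

Definition cond (k : nat) (d X : Z) (p : Z * Z) : bool :=
  Z.leb (Z.abs (fst p)) X && Z.leb (Z.abs (snd p)) X &&
  Z.eqb ((fst p ^ Z.of_nat k - snd p ^ Z.of_nat k) mod d) 0.

Definition dp (k : nat) (d g : Z) : Z := d / Z.gcd d (g ^ Z.of_nat k).

Definition predg (k : nat) (d X g : Z) (p : Z * Z) : bool :=
  Z.leb (Z.abs (fst p)) X && Z.leb (Z.abs (snd p)) X && Z.eqb (fst p mod g) 0 &&
  Z.eqb (snd p mod g) 0 && Z.eqb (Z.gcd (fst p / g) (dp k d g)) 1 &&
  Z.eqb (((fst p / g) ^ Z.of_nat k - (snd p / g) ^ Z.of_nat k) mod (dp k d g)) 0.

Lemma dp_pos k d g : 1 <= d -> 1 <= g -> 1 <= dp k d g.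
Proof.
  intros Hd Hg. unfold dp. set (h := Z.gcd d (g ^ Z.of_nat k)).
  assert (Hh : 0 < h).
  { assert (h <> 0) by (unfold h; rewrite Z.gcd_eq_0; lia). pose proof (Z.gcd_nonneg d (g ^ Z.of_nat k)). lia. }
  assert (Ed : d = h * (d / h)) by (apply Zdivide_Zdiv_eq; auto; apply Z.gcd_divide_l).
  nia.
Qed.

Lemma inner_count k d X g u L : (1 <= k)%nat -> 1 <= d -> 1 <= g -> 0 <= X -> NoDup L ->
  (cnt (fun v => predg k d X g (u, v)) L <=
   rho k (dp k d g) * (Z.to_nat (2 * X / (g * dp k d g)) + 1))%nat.
Proof.
  intros Hk Hd Hg HX HL. set (q := dp k d g). assert (Hq : 1 <= q) by (apply dp_pos; auto).
  destruct (Z.eq_dec (Z.gcd (u / g) q) 1) as [Hc|Hc].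
  2:{ rewrite cnt_zero; [lia|]. intros v _. unfold predg. cbn [fst snd]. fold q.
      destruct (Z.eqb_spec (Z.gcd (u / g) q) 1); [contradiction|]. rewrite !andb_false_r. reflexivity. }
  set (u1 := u / g) in *.
  destruct (rel_prime_bezout _ _ (proj1 (Zgcd_1_rel_prime _ _) Hc)) as [a b Hab].
  eapply Nat.le_trans.
  { apply (cnt_cover _ (fun z v => Z.leb (Z.abs v) X && Z.eqb ((v - (g * u1 * z)) mod (g * q)) 0)
       (filter (rootp k q) (zseq 0 q))).
    intros v _ Hv. unfold predg in Hv. cbn [fst snd] in Hv. fold q u1 in Hv.
    repeat rewrite andb_true_iff in Hv. destruct Hv as [[[[[Hu Hvx] Hgu] Hgv] _] Hdiv].
    apply modeq0 in Hgv, Hdiv; try lia.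
    set (v1 := v / g) in *.
    assert (Ev : v = g * v1) by (apply Zdivide_Zdiv_eq; auto; lia).
    set (z := (v1 * a) mod q).
    assert (Hz : (q | v1 * a - z)).
    { unfold z. rewrite Z.mod_eq by lia. exists (v1 * a / q). ring. }
    exists z. split.
    - apply filter_In. split.
      + apply in_zseq. pose proof (Z.mod_pos_bound (v1 * a) q ltac:(lia)). unfold z. lia.
      + unfold rootp. apply modeq0; [lia|].
        replace (z ^ Z.of_nat k - 1) with
          (- ((v1 * a) ^ Z.of_nat k - z ^ Z.of_nat k) - a ^ Z.of_nat k * (u1 ^ Z.of_nat k - v1 ^ Z.of_nat k)
           + ((a * u1) ^ Z.of_nat k - 1)) by (rewrite !Z.pow_mul_l; ring).
        apply Z.divide_add_r; [apply Z.divide_sub_r|].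
        * apply Z.divide_opp_r. eapply Z.divide_trans; [apply Hz|apply dvd_pow_diff].
        * apply Z.divide_mul_r; auto.
        * apply dvd_pow_sub1'. exists (- b). lia.
    - apply andb_true_iff. split; auto. apply modeq0; [nia|].
      replace (v - g * u1 * z) with (g * (u1 * (v1 * a - z) + v1 * b * q)).
      2:{ transitivity (g * (v1 * (a * u1 + b * q) - u1 * z)); [ring|]. rewrite Hab, Ev. ring. }
      apply Z.mul_divide_mono_l. apply Z.divide_add_r; [apply Z.divide_mul_r; auto|].
      apply Z.divide_factor_r. }
  apply Nat.le_trans with (lsum (fun _ => (Z.to_nat (2 * X / (g * q)) + 1)%nat) (filter (rootp k q) (zseq 0 q))).
  - apply lsum_le. intros z _. apply AP_count; auto; nia.
  - rewrite lsum_const. unfold rho, cnt. lia.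
Qed.

Lemma main_count k d X L : (1 <= k)%nat -> 1 <= d -> 0 <= X -> NoDup L ->
  (cnt (cond k d X) (list_prod L L) <=
   lsum (fun g => (Z.to_nat (2 * X / g) + 1) *
         (rho k (dp k d g) * (Z.to_nat (2 * X / (g * dp k d g)) + 1)))%nat (divs d))%nat.
Proof.
  intros Hk Hd HX HL.
  eapply Nat.le_trans.
  { apply (cnt_cover _ (predg k d X) (divs d)).
    intros [u v] _ Hc. unfold cond in Hc. cbn [fst snd] in Hc.
    repeat rewrite andb_true_iff in Hc. destruct Hc as [[Hu Hv] Hdv].
    apply modeq0 in Hdv; [|lia].
    destruct (pair_decomp k u v d Hk Hd Hdv) as [Hg1 [Hgd [Hgu [Hgv [Hco Hdp]]]]].
    exists (Z.gcd (Z.gcd u v) d). split.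
    - apply in_divs; auto.
    - unfold predg. cbn [fst snd]. repeat rewrite andb_true_iff. unfold dp.
      repeat split; auto; try (apply modeq0; auto; lia).
      + apply Z.eqb_eq; auto.
      + apply modeq0; auto. pose proof (dp_pos k d (Z.gcd (Z.gcd u v) d) Hd ltac:(lia)). unfold dp in *. lia. }
  apply lsum_le. intros g Hg. apply in_divs in Hg; auto. destruct Hg as [Hg1 _].
  rewrite cnt_prod.
  set (R := (rho k (dp k d g) * (Z.to_nat (2 * X / (g * dp k d g)) + 1))%nat).
  apply Nat.le_trans with
    (lsum (fun u => if (Z.leb (Z.abs u) X && Z.eqb ((u - 0) mod g) 0) then R else 0%nat) L).
  - apply lsum_le. intros u _.
    destruct (Z.leb (Z.abs u) X && Z.eqb ((u - 0) mod g) 0) eqn:Eu.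
    + apply inner_count; auto; lia.
    + rewrite cnt_zero; [lia|]. intros v _. unfold predg. cbn [fst snd].
      rewrite Z.sub_0_r in Eu. destruct (Z.leb (Z.abs u) X); destruct (Z.eqb (u mod g) 0); cbn [andb] in Eu;
        try discriminate; repeat (rewrite andb_false_r || rewrite andb_false_l); reflexivity.
  - rewrite lsum_ind. rewrite Nat.mul_comm. apply Nat.mul_le_mono_r. apply AP_count; auto; lia.
Qed.

Open Scope R_scope.

Lemma zrange_NoDup M : NoDup (zrange M).
Proof.
  unfold zrange. apply NoDup_map_NoDup_ForallPairs; [|apply seq_NoDup].
  intros x y _ _ E. lia.
Qed.

Lemma abs_le_iff (u : Z) (B : R) (X : Z) : IZR X <= B < IZR X + 1 ->
  (if Rle_dec (Rabs (IZR u)) B then true else false) = Z.leb (Z.abs u) X.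
Proof.
  intros [H1 H2]. rewrite <- abs_IZR. destruct (Rle_dec (IZR (Z.abs u)) B) as [H|H].
  - symmetry. apply Z.leb_le. assert (IZR (Z.abs u) < IZR (X + 1)) by (rewrite plus_IZR; lra).
    apply lt_IZR in H0. lia.
  - symmetry. apply Z.leb_gt. destruct (Z_le_gt_dec (Z.abs u) X) as [H3|H3]; [|lia].
    exfalso. apply H. apply IZR_le in H3. lra.
Qed.

Lemma pair_count_eq k B d : 1 <= B ->
  pair_count k B d = cnt (cond k (Z.of_nat d) (up B - 1))
                         (list_prod (zrange (Z.abs (up B))) (zrange (Z.abs (up B)))).
Proof.
  intros HB. destruct (archimed B) as [H1 H2].
  assert (HX : IZR (up B - 1) <= B < IZR (up B - 1) + 1) by (rewrite minus_IZR; lra).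
  unfold pair_count, cnt. f_equal. apply filter_ext. intros [u v]. unfold cond. cbn [fst snd].
  rewrite (abs_le_iff u B _ HX), (abs_le_iff v B _ HX). reflexivity.
Qed.

Lemma big_case k d X L : (1 <= k)%nat -> (0 <= X)%Z -> NoDup L ->
  (2 * X ^ Z.of_nat k < d)%Z ->
  (cnt (cond k d X) (list_prod L L) <= 2 * (Z.to_nat (2 * X) + 1))%nat.
Proof.
  intros Hk HX HL Hd. rewrite cnt_prod.
  apply Nat.le_trans with
    (lsum (fun u => if (Z.leb (Z.abs u) X && Z.eqb ((u - 0) mod 1) 0) then 2%nat else 0%nat) L).
  - apply lsum_le. intros u _.
    destruct (Z.leb (Z.abs u) X) eqn:Eu.
    + cbn [andb]. rewrite Z.mod_1_r. cbn [Z.eqb].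
      unfold cnt. change 2%nat with (length [u; (- u)%Z]).
      apply (cnt_inj (fun v => v)).
      * apply NoDup_filter; auto.
      * intros v Hv. apply filter_In in Hv. destruct Hv as [_ Hv].
        unfold cond in Hv. cbn [fst snd] in Hv. repeat rewrite andb_true_iff in Hv.
        destruct Hv as [[Hu Hv] Hdv]. apply Z.leb_le in Hu, Hv. apply modeq0 in Hdv; [|lia].
        assert (Hu' : (Z.abs (u ^ Z.of_nat k) <= X ^ Z.of_nat k)%Z).
        { rewrite Z.abs_pow. apply Z.pow_le_mono_l. lia. }
        assert (Hv' : (Z.abs (v ^ Z.of_nat k) <= X ^ Z.of_nat k)%Z).
        { rewrite Z.abs_pow. apply Z.pow_le_mono_l. lia. }
        apply div_small0 in Hdv; [|lia].
        assert (E : (Z.abs u ^ Z.of_nat k = Z.abs v ^ Z.of_nat k)%Z).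
        { rewrite <- !Z.abs_pow. f_equal. lia. }
        apply Z.pow_inj_l in E; try lia.
        destruct (Z.abs_spec u); destruct (Z.abs_spec v); simpl; lia.
      * auto.
    + rewrite cnt_zero; [lia|]. intros v _. unfold cond. cbn [fst snd]. rewrite Eu. reflexivity.
  - rewrite lsum_ind. apply Nat.mul_le_mono_l.
    eapply Nat.le_trans; [apply AP_count; auto; lia|]. rewrite Z.div_1_r. lia.
Qed.

Lemma lsum_real {T} (F : T -> nat) (l : list T) (M : R) :
  (forall g, In g l -> INR (F g) <= M) -> INR (lsum F l) <= INR (length l) * M.
Proof.
  induction l as [|g l IH]; intros H; cbn [lsum length]; [simpl; lra|].
  rewrite plus_INR, S_INR. specialize (IH (fun y Hy => H y (or_intror Hy))).
  specialize (H g (or_introl eq_refl)). lra.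
Qed.

Lemma real_expand x g q R : 1 <= x -> 1 <= g -> 1 <= q -> / (g * g * q) <= R ->
  (2 * x / g + 1) * (2 * x / (g * q) + 1) <= 4 * (x * x) * R + 5 * x.
Proof.
  intros Hx Hg Hq HR.
  assert (Ha : 0 < / g <= 1) by (split; [apply Rinv_0_lt_compat; lra|rewrite <- Rinv_1; apply Rinv_le_contravar; lra]).
  assert (Hb : 0 < / q <= 1) by (split; [apply Rinv_0_lt_compat; lra|rewrite <- Rinv_1; apply Rinv_le_contravar; lra]).
  unfold Rdiv. rewrite Rinv_mult in *. rewrite Rinv_mult in HR.
  set (a := / g) in *. set (b := / q) in *.
  assert (0 <= a * b <= 1) by nra.
  assert (x * x * (a * a * b) <= x * x * R) by (apply Rmult_le_compat_l; nra).
  nra.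
Qed.

Lemma INR_toZ_div (X g : Z) : (0 <= X)%Z -> (1 <= g)%Z ->
  INR (Z.to_nat (2 * X / g)) <= 2 * IZR X / IZR g.
Proof.
  intros HX Hg. rewrite INR_IZR_INZ, Z2Nat.id by (apply Z.div_pos; lia).
  assert (H : (g * (2 * X / g) <= 2 * X)%Z) by (apply Z.mul_div_le; lia).
  apply IZR_le in H. rewrite mult_IZR, mult_IZR in H.
  assert (0 < IZR g) by (apply IZR_lt; lia).
  apply Rmult_le_reg_l with (IZR g); auto. unfold Rdiv.
  replace (IZR g * (2 * IZR X * / IZR g)) with (2 * IZR X) by (field; lra). lra.
Qed.

Lemma size_real k g d : (2 <= k)%nat -> (1 <= g)%Z -> (1 <= d)%Z ->
  / (IZR g * IZR g * IZR (dp k d g)) <= Rpower (IZR d) (- (2 / INR k)).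
Proof.
  intros Hk Hg Hd. pose proof (size_ineq k g d Hk Hg Hd) as S. fold (dp k d g) in S.
  assert (Hq : (1 <= dp k d g)%Z) by (apply dp_pos; auto).
  set (Y := IZR (g ^ 2 * dp k d g)).
  assert (HY : 1 <= Y) by (unfold Y; apply IZR_le; nia).
  assert (HkR : 0 < INR k) by (apply lt_0_INR; lia).
  assert (Hd0 : 0 < IZR d) by (apply IZR_lt; lia).
  assert (E1 : Rpower (IZR d) (2 / INR k) <= Y).
  { replace (2 / INR k) with (INR 2 * / INR k) by (simpl; field; lra).
    rewrite <- Rpower_mult, Rpower_pow by auto.
    replace Y with (Rpower (Y ^ k) (/ INR k)).
    - apply Rle_Rpower_l. left; apply Rinv_0_lt_compat; auto.
      split; [apply pow_lt; nra|]. rewrite pow_IZR. unfold Y. rewrite pow_IZR.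
      apply IZR_le. change (Z.of_nat 2) with 2%Z. auto.
    - rewrite <- Rpower_pow by lra. rewrite Rpower_mult. rewrite Rinv_r by lra. apply Rpower_1. lra. }
  rewrite Rpower_Ropp. replace (IZR g * IZR g * IZR (dp k d g)) with Y.
  2:{ unfold Y. rewrite mult_IZR. f_equal. change (g ^ 2)%Z with (g ^ Z.pos 2)%Z. rewrite Z.pow_2_r, mult_IZR. ring. }
  apply Rinv_le_contravar; auto. apply Rpower_pos.
Qed.

Open Scope R_scope.

Lemma dp_le k d g : (1 <= d)%Z -> (1 <= g)%Z -> (dp k d g <= d)%Z.
Proof.
  intros Hd Hg. unfold dp. set (h := Z.gcd d (g ^ Z.of_nat k)).
  assert (Hh : (0 < h)%Z).
  { assert (h <> 0%Z) by (unfold h; rewrite Z.gcd_eq_0; lia). pose proof (Z.gcd_nonneg d (g ^ Z.of_nat k)). lia. }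
  apply Z.div_le_upper_bound; nia.
Qed.

Theorem lemma2p4 :
  forall k : nat, (3 <= k)%nat ->
  forall eps : R, 0 < eps ->
  exists C : R, 0 < C /\
    forall (B : R) (d : nat), 1 <= B -> (1 <= d)%nat ->
      INR (pair_count k B d) <=
      C * (Rpower B (1 + eps) + Rpower B (2 + eps) * Rpower (INR d) (eps - 2 / INR k)).
Proof.
  intros k Hk eps Heps.
  assert (HkR : 3 <= INR k) by (replace 3 with (INR 3) by (simpl; lra); apply le_INR; auto).
  set (dl := eps / (2 * INR k)).
  assert (Hdl : 0 < dl) by (unfold dl; apply Rdiv_lt_0_compat; lra).
  destruct (rho_tau_bound k dl ltac:(lia) Hdl) as [C1 [HC1 Hb]].
  exists (6 + 4 * C1 * C1 + 5 * C1 * C1 * Rpower 2 eps). split.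
  { pose proof (Rpower_pos 2 eps). nra. }
  intros B d HB Hd.
  rewrite pair_count_eq by auto.
  destruct (archimed B) as [Hu1 Hu2].
  set (X := (up B - 1)%Z).
  assert (HXB : IZR X <= B < IZR X + 1) by (unfold X; rewrite minus_IZR; lra).
  assert (HX1 : (1 <= X)%Z).
  { assert (1 < IZR (up B)) by lra. apply lt_IZR in H. unfold X. lia. }
  assert (Hx1 : 1 <= IZR X) by (apply IZR_le; auto).
  set (x := IZR X) in *.
  set (L := zrange (Z.abs (up B))).
  assert (HL : NoDup L) by apply zrange_NoDup.
  set (D := Z.of_nat d).
  assert (HD : (1 <= D)%Z) by (unfold D; lia).
  assert (HDR : IZR D = INR d) by (unfold D; rewrite INR_IZR_INZ; reflexivity).
  assert (HD1 : 1 <= IZR D) by (apply IZR_le; auto).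
  set (P1 := Rpower B (1 + eps)).
  set (P2 := Rpower B (2 + eps) * Rpower (INR d) (eps - 2 / INR k)).
  assert (HP1 : 0 < P1) by apply Rpower_pos.
  assert (HP2 : 0 < P2) by (apply Rmult_lt_0_compat; apply Rpower_pos).
  assert (HP1B : B <= P1).
  { unfold P1. rewrite <- (Rpower_1 B) at 1 by lra. apply Rle_Rpower; lra. }
  assert (HC12 : 0 <= C1 * C1) by nra.
  pose proof (Rpower_pos 2 eps) as H2e.
  destruct (Z_lt_le_dec (2 * X ^ Z.of_nat k) D) as [Hbig|Hsmall].
  -
    eapply Rle_trans; [apply le_INR, big_case; auto; lia|].
    assert (E : INR (Z.to_nat (2 * X)) = 2 * x).
    { rewrite INR_IZR_INZ, Z2Nat.id by lia. rewrite mult_IZR. reflexivity. }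
    rewrite mult_INR, plus_INR, E. simpl (INR 2). simpl (INR 1).
    assert (0 <= 5 * C1 * C1 * Rpower 2 eps) by nra.
    nra.
  -
    eapply Rle_trans; [apply le_INR, main_count; auto; lia|].
    set (R := Rpower (IZR D) (- (2 / INR k))).
    assert (HR : 0 < R) by apply Rpower_pos.
    set (T := C1 * Rpower (IZR D) dl * (4 * (x * x) * R + 5 * x)).
    eapply Rle_trans.
    { apply (lsum_real _ _ T). intros g Hg. apply in_divs in Hg; auto. destruct Hg as [[Hg1 Hg2] _].
      assert (Hq := dp_pos k D g HD Hg1). assert (Hq2 := dp_le k D g HD Hg1).
      rewrite mult_INR, mult_INR, !plus_INR. simpl (INR 1).
      assert (HA := INR_toZ_div X g ltac:(lia) Hg1).
      assert (HBq := INR_toZ_div X (g * dp k D g) ltac:(lia) ltac:(nia)).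
      rewrite mult_IZR in HBq. fold x in HA, HBq.
      destruct (Hb (dp k D g) Hq) as [Hr _].
      assert (Hr2 : Rpower (IZR (dp k D g)) dl <= Rpower (IZR D) dl).
      { apply Rle_Rpower_l; [lra|]. split; [apply IZR_lt; lia|apply IZR_le; auto]. }
      assert (Hg1R : 1 <= IZR g) by (apply IZR_le; auto).
      assert (Hq1R : 1 <= IZR (dp k D g)) by (apply IZR_le; auto).
      assert (Hexp := real_expand x (IZR g) (IZR (dp k D g)) R Hx1 Hg1R Hq1R
                        (size_real k g D ltac:(lia) Hg1 HD)).
      pose proof (pos_INR (Z.to_nat (2 * X / g))). pose proof (pos_INR (Z.to_nat (2 * X / (g * dp k D g)))).
      pose proof (pos_INR (rho k (dp k D g))).
      assert (HrD : INR (rho k (dp k D g)) <= C1 * Rpower (IZR D) dl) by nra.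
      set (a := INR (Z.to_nat (2 * X / g))) in *.
      set (b := INR (Z.to_nat (2 * X / (g * dp k D g)))) in *.
      set (r := INR (rho k (dp k D g))) in *.
      assert (Hab : (a + 1) * (b + 1) <= (2 * x / IZR g + 1) * (2 * x / (IZR g * IZR (dp k D g)) + 1)).
      { apply Rmult_le_compat; lra. }
      unfold T.
      replace ((a + 1) * (r * (b + 1))) with (r * ((a + 1) * (b + 1))) by ring.
      pose proof (Rpower_pos (IZR D) dl).
      apply Rmult_le_compat; try nra. }
    destruct (Hb D HD) as [_ Ht].
    fold (tau D). unfold T.
    assert (E2 : Rpower (IZR D) dl * Rpower (IZR D) dl = Rpower (IZR D) (eps / INR k)).
    { rewrite <- Rpower_plus. f_equal. unfold dl. field. lra. }
    assert (Term1 : Rpower (IZR D) (eps / INR k) * R <= Rpower (INR d) (eps - 2 / INR k)).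
    { unfold R. rewrite <- Rpower_plus, HDR. apply Rle_Rpower; [rewrite <- HDR; lra|].
      assert (eps / INR k <= eps).
      { unfold Rdiv. rewrite <- (Rmult_1_r eps) at 2. apply Rmult_le_compat_l; [lra|].
        rewrite <- Rinv_1. apply Rinv_le_contravar; lra. }
      lra. }
    assert (Hx2 : x * x <= Rpower B (2 + eps)).
    { apply Rle_trans with (B * B); [nra|].
      replace (B * B) with (Rpower B (INR 2)) by (rewrite Rpower_pow by lra; simpl; ring).
      apply Rle_Rpower; [lra|simpl; lra]. }
    assert (HDx : IZR D <= 2 * x ^ k).
    { apply IZR_le in Hsmall. rewrite mult_IZR, <- pow_IZR in Hsmall. exact Hsmall. }
    assert (Term2 : x * Rpower (IZR D) (eps / INR k) <= Rpower 2 eps * P1).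
    { assert (S1 : Rpower (IZR D) (eps / INR k) <= Rpower (2 * x ^ k) (eps / INR k)).
      { apply Rle_Rpower_l; [apply Rlt_le, Rdiv_lt_0_compat; lra|]. lra. }
      rewrite <- Rpower_mult_distr in S1 by (try apply pow_lt; lra).
      rewrite <- Rpower_pow in S1 by lra. rewrite Rpower_mult in S1.
      replace (INR k * (eps / INR k)) with eps in S1 by (field; lra).
      assert (S2 : Rpower 2 (eps / INR k) <= Rpower 2 eps).
      { apply Rle_Rpower; [lra|]. unfold Rdiv. rewrite <- (Rmult_1_r eps) at 2.
        apply Rmult_le_compat_l; [lra|]. rewrite <- Rinv_1. apply Rinv_le_contravar; lra. }
      assert (S3 : x * Rpower x eps <= P1).
      { unfold P1. rewrite <- (Rpower_1 x) at 1 by lra. rewrite <- Rpower_plus.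
        apply Rle_Rpower_l; [lra|]. lra. }
      pose proof (Rpower_pos x eps). pose proof (Rpower_pos 2 (eps / INR k)).
      pose proof (Rpower_pos (IZR D) (eps / INR k)).
      apply Rle_trans with (x * (Rpower 2 (eps / INR k) * Rpower x eps)).
      { apply Rmult_le_compat_l; lra. }
      apply Rle_trans with (x * (Rpower 2 eps * Rpower x eps)).
      { apply Rmult_le_compat_l; [lra|]. apply Rmult_le_compat_r; lra. }
      replace (x * (Rpower 2 eps * Rpower x eps)) with (Rpower 2 eps * (x * Rpower x eps)) by ring.
      apply Rmult_le_compat_l; lra. }
    pose proof (pos_INR (tau D)).
    pose proof (Rpower_pos (IZR D) dl).
    assert (Htot : INR (tau D) * (C1 * Rpower (IZR D) dl * (4 * (x * x) * R + 5 * x)) <=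
       C1 * C1 * (4 * (x * x) * (Rpower (IZR D) (eps / INR k) * R) + 5 * (x * Rpower (IZR D) (eps / INR k)))).
    { rewrite <- E2.
      assert (0 <= C1 * Rpower (IZR D) dl * (4 * (x * x) * R + 5 * x)).
      { apply Rmult_le_pos; [apply Rmult_le_pos; lra|].
        assert (0 <= x * x) by (apply Rmult_le_pos; lra).
        assert (0 <= (x * x) * R) by (apply Rmult_le_pos; lra). lra. }
      apply Rle_trans with ((C1 * Rpower (IZR D) dl) * (C1 * Rpower (IZR D) dl * (4 * (x * x) * R + 5 * x))).
      - apply Rmult_le_compat_r; auto.
      - right. ring. }
    eapply Rle_trans; [exact Htot|].
    assert (0 <= Rpower (IZR D) (eps / INR k) * R) by (pose proof (Rpower_pos (IZR D) (eps / INR k)); nra).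
    assert (4 * (x * x) * (Rpower (IZR D) (eps / INR k) * R) <= 4 * P2).
    { unfold P2. apply Rle_trans with (4 * (Rpower B (2 + eps) * Rpower (INR d) (eps - 2 / INR k))); [|lra].
      pose proof (Rpower_pos (INR d) (eps - 2 / INR k)). nra. }
    assert (0 <= x * Rpower (IZR D) (eps / INR k)) by (pose proof (Rpower_pos (IZR D) (eps / INR k)); nra).
    apply Rle_trans with (C1 * C1 * (4 * P2 + 5 * (Rpower 2 eps * P1))).
    { apply Rmult_le_compat_l; auto. lra. }
    assert (0 <= C1 * C1 * P1) by (apply Rmult_le_pos; lra).
    assert (0 <= C1 * C1 * Rpower 2 eps * P2) by (apply Rmult_le_pos; [apply Rmult_le_pos|]; lra).
    replace ((6 + 4 * C1 * C1 + 5 * C1 * C1 * Rpower 2 eps) * (P1 + P2)) with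
      (6 * (P1 + P2) + 4 * (C1 * C1 * P1) + 4 * (C1 * C1 * P2) + 5 * (C1 * C1 * Rpower 2 eps * P1)
       + 5 * (C1 * C1 * Rpower 2 eps * P2)) by ring.
    replace (C1 * C1 * (4 * P2 + 5 * (Rpower 2 eps * P1))) with
      (4 * (C1 * C1 * P2) + 5 * (C1 * C1 * Rpower 2 eps * P1)) by ring.
    lra.
Qed.
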